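(* Let $S$ be a set of $n\ge 3$ points in the plane in general position (no four points of $S$ cocircular, no three collinear), and assume $n$ is odd. Then the reduced Euler characteristic of the Voronoi poset of $S$ vanishes: $$\tilde\chi(\Pi(S)) := \sum_{i=-1}^{n-1}(-1)^i \bar f_i = 0,$$ where $\bar f_i$ is the number of elements of $\Pi(S)$ of cardinality $i+1$.
   Context: For points $x,y$ in the plane let $h(x,y)=\{p\in\mathbb{R}^2 : d(x,p)\le d(y,p)\}$. For $A\subseteq S$ let $V(A)=\bigcap_{x\in A,\,y\in S\setminus A} h(x,y)$ (equal to $\mathbb{R}^2$ when $A=\emptyset$). The Voronoi poset $\Pi(S)$ is the set of all subsets $A\subseteq S$ (of any size $0\le|A|\le n$) with $V(A)\ne\emptyset$, ordered by inclusion (with points identified with labels in $[n]$). Thus $\bar f_{-1}=1$ (the empty set) and, for $1\le k\le n$, $\bar f_{k-1}$ equals the number of regions of the $k$-th order Voronoi diagram. *)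

(* Defs.v *)
From HB Require Import structures.
From mathcomp Require Import all_boot all_order all_algebra.
From mathcomp Require Import boolp reals.
Set Implicit Arguments. Unset Strict Implicit. Unset Printing Implicit Defensive.
Import Order.TTheory GRing.Theory Num.Theory.
Local Open Scope ring_scope.

Definition pt (R : realType) := (R * R)%type.

Definition dist (R : realType) (x p : pt R) : R :=
  Num.sqrt ((x.1 - p.1) ^+ 2 + (x.2 - p.2) ^+ 2).

Definition halfplane (R : realType) (x y : pt R) (p : pt R) : Prop :=
  dist x p <= dist y p.

(* The point configuration S = {P 0, ..., P (n-1)}, labelled by [n].
   V(A) <> empty  iff  some point p lies in h(P x, P y) for all x in A, y notin A. *)
Definition voronoi_nonempty (R : realType) (n : nat) (P : 'I_n -> pt R)
    (A : {set 'I_n}) : Prop :=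
  exists p : pt R, forall x y : 'I_n, x \in A -> y \notin A -> halfplane (P x) (P y) p.

Definition collinear (R : realType) (p q r : pt R) : Prop :=
  exists a b c : R, (a != 0 \/ b != 0) /\
    a * p.1 + b * p.2 = c /\ a * q.1 + b * q.2 = c /\ a * r.1 + b * r.2 = c.

Definition cocircular (R : realType) (p q r s : pt R) : Prop :=
  exists (c : pt R) (rad : R), 0 < rad /\
    dist p c = rad /\ dist q c = rad /\ dist r c = rad /\ dist s c = rad.

Definition general_position (R : realType) (n : nat) (P : 'I_n -> pt R) : Prop :=
  (forall i j k : 'I_n, i != j -> i != k -> j != k -> ~ collinear (P i) (P j) (P k)) /\
  (forall i j k l : 'I_n, uniq [:: i; j; k; l] ->
      ~ cocircular (P i) (P j) (P k) (P l)).

(* fbar_{k-1} = number of elements of the Voronoi poset Pi(S) of cardinality k. *)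
Definition fbar (R : realType) (n : nat) (P : 'I_n -> pt R) (k : nat) : nat :=
  #|[set A : {set 'I_n} | `[< voronoi_nonempty P A >] && (#|A| == k)]|.

(* Reduced Euler characteristic  sum_{i=-1}^{n-1} (-1)^i fbar_i ,
   reindexed by k = i+1 in 0..n, using (-1)^(k-1) = (-1)^(k+1). *)
Definition red_euler_char (R : realType) (n : nat) (P : 'I_n -> pt R) : int :=
  \sum_(k < n.+1) (-1) ^+ k.+1 * (fbar P k)%:Z.

(* Main.v *)
Require Import Defs.
From HB Require Import structures.
From mathcomp Require Import all_boot all_order all_algebra.
From mathcomp Require Import boolp reals.
From mathcomp Require Import ring lra.
Import Order.TTheory GRing.Theory Num.Theory.
Local Open Scope ring_scope.

Set Implicit Arguments.
Unset Strict Implicit.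
Unset Printing Implicit Defensive.

Section Geo.
Variable R : realType.

Definition dot (u v : R * R) : R := u.1 * v.1 + u.2 * v.2.
Definition crs (u v : R * R) : R := u.1 * v.2 - u.2 * v.1.
Definition vsub (u v : R * R) : R * R := (u.1 - v.1, u.2 - v.2).
Definition vadd (u v : R * R) : R * R := (u.1 + v.1, u.2 + v.2).
Definition vsc (t : R) (u : R * R) : R * R := (t * u.1, t * u.2).
Definition wf (x q : R * R) : R := x.1 ^+ 2 + x.2 ^+ 2 - 2 * (q.1 * x.1 + q.2 * x.2).

Lemma dist_wf (x q : R * R) : dist x q = Num.sqrt (wf x q + (q.1 ^+ 2 + q.2 ^+ 2)).
Proof. rewrite /dist /wf; congr Num.sqrt; ring. Qed.

Lemma wf_nneg (x q : R * R) : 0 <= wf x q + (q.1 ^+ 2 + q.2 ^+ 2).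
Proof.
have -> : wf x q + (q.1 ^+ 2 + q.2 ^+ 2) = (x.1 - q.1) ^+ 2 + (x.2 - q.2) ^+ 2.
  rewrite /wf; ring.
by rewrite addr_ge0 // sqr_ge0.
Qed.

Lemma halfplaneE (x y q : R * R) : halfplane x y q <-> wf x q <= wf y q.
Proof.
rewrite /halfplane !dist_wf ler_sqrt ?wf_nneg //; split => h; lra.
Qed.

Lemma wf_add (x y q v : R * R) :
  wf y (vadd q v) - wf x (vadd q v) = wf y q - wf x q + 2 * dot v (vsub x y).
Proof. rewrite /wf /dot /vadd /vsub /=; ring. Qed.

Lemma vec_eq0 (a b v : R * R) : crs a b != 0 -> dot v a = 0 -> dot v b = 0 -> v = (0, 0).
Proof.
move=> hc h1 h2.
have e1 : crs a b * v.1 = b.2 * dot v a - a.2 * dot v b by rewrite /crs /dot; ring.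
have e2 : crs a b * v.2 = a.1 * dot v b - b.1 * dot v a by rewrite /crs /dot; ring.
rewrite h1 h2 !mulr0 subr0 in e1 e2.
move/eqP: e1; rewrite mulf_eq0 (negbTE hc) /= => /eqP e1.
move/eqP: e2; rewrite mulf_eq0 (negbTE hc) /= => /eqP e2.
by case: v e1 e2 {h1 h2} => ? ? /= -> ->.
Qed.


Lemma dist0 (x q : R * R) : dist x q = 0 -> x = q.
Proof.
rewrite /dist => /eqP; rewrite sqrtr_eq0 => h.
have h1 : (x.1 - q.1) ^+ 2 = 0.
  apply/eqP; rewrite eq_le sqr_ge0 andbT; move: h; have := sqr_ge0 (x.2 - q.2); lra.
have h2 : (x.2 - q.2) ^+ 2 = 0.
  apply/eqP; rewrite eq_le sqr_ge0 andbT; move: h; have := sqr_ge0 (x.1 - q.1); lra.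
move/eqP: h1; rewrite sqrf_eq0 subr_eq0 => /eqP h1.
move/eqP: h2; rewrite sqrf_eq0 subr_eq0 => /eqP h2.
by case: x q {h} h1 h2 => ? ? [? ?] /= -> ->.
Qed.

Ltac cl := first [ by []
  | match goal with H : is_true (?z != ?z) |- _ => by rewrite eqxx in H end
  | match goal with H1 : is_true (?z \in ?A), H2 : is_true (?z \notin ?A) |- _ => by rewrite H1 in H2 end ].

Section Vor.
Variables (n : nat) (P : 'I_n -> pt R).
Hypothesis Pinj : injective P.
Hypothesis gp : general_position P.

Definition nrm (x y : 'I_n) := vsub (P x) (P y).
Definition Vr (A : {set 'I_n}) (q : R * R) :=
  forall x y, x \in A -> y \notin A -> wf (P x) q <= wf (P y) q.

Lemma vnE A : voronoi_nonempty P A <-> exists q, Vr A q.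
Proof.
split=> [[q hq]|[q hq]]; exists q => x y hx hy.
  by apply/halfplaneE; apply: hq.
by apply/halfplaneE; apply: hq.
Qed.

Lemma c4 q m i j k l : uniq [:: i; j; k; l] ->
  wf (P i) q = m -> wf (P j) q = m -> wf (P k) q = m -> wf (P l) q = m -> False.
Proof.
move=> hu hi hj hk hl.
apply: (gp.2 i j k l hu).
have dE z : wf (P z) q = m -> dist (P z) q = Num.sqrt (m + (q.1 ^+ 2 + q.2 ^+ 2)).
  by move=> hz; rewrite dist_wf hz.
exists q, (Num.sqrt (m + (q.1 ^+ 2 + q.2 ^+ 2))).
rewrite !dE //; split => //.
rewrite lt_neqAle sqrtr_ge0 andbT; apply/eqP => h0.
have ei : P i = q by apply: dist0; rewrite dE.
have ej : P j = q by apply: dist0; rewrite dE.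
move: hu; have -> : i = j by apply: Pinj; rewrite ei ej.
by rewrite /= inE eqxx.
Qed.

Lemma memNeq (A : {set 'I_n}) x y : x \in A -> y \notin A -> x != y.
Proof. by move=> hx hy; apply/eqP => e; subst; rewrite hx in hy. Qed.

Ltac un := rewrite /= !inE ?negb_or ?andbT; repeat (apply/andP; split);
  apply/eqP => E; subst; cl.

Lemma three_act A q x1 y1 x2 y2 x3 y3 : Vr A q ->
  x1 \in A -> y1 \notin A -> wf (P x1) q = wf (P y1) q ->
  x2 \in A -> y2 \notin A -> wf (P x2) q = wf (P y2) q ->
  x3 \in A -> y3 \notin A -> wf (P x3) q = wf (P y3) q ->
  (x1, y1) != (x2, y2) -> (x1, y1) != (x3, y3) -> (x2, y2) != (x3, y3) -> False.
Proof.
move=> hV hx1 hy1 e1 hx2 hy2 e2 hx3 hy3 e3 d12 d13 d23.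
set m := wf (P x1) q.
have f2 : wf (P x2) q = m.
  have := hV _ _ hx2 hy1; have := hV _ _ hx1 hy2; rewrite /m; lra.
have f3 : wf (P x3) q = m.
  have := hV _ _ hx3 hy1; have := hV _ _ hx1 hy3; rewrite /m; lra.
have g1 : wf (P y1) q = m by rewrite -e1.
have g2 : wf (P y2) q = m by rewrite -e2.
have g3 : wf (P y3) q = m by rewrite -e3.
have f1 : wf (P x1) q = m by [].
move: d12 d13 d23; rewrite !xpair_eqE => d12 d13 d23.
case: (eqVneq x1 x2) => [E|n12].
  subst x2; rewrite eqxx /= in d12.
  case: (eqVneq y3 y1) => [E|n31].
    subst y3; rewrite eqxx andbT in d13.
    by apply: (@c4 q m x1 x3 y1 y2) => //; un.
  case: (eqVneq y3 y2) => [E|n32].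
    subst y3; rewrite eqxx andbT in d23.
    by apply: (@c4 q m x1 x3 y1 y2) => //; un.
  by apply: (@c4 q m x1 y1 y2 y3) => //; un.
case: (eqVneq y1 y2) => [E|n12'].
  subst y2.
  case: (eqVneq x3 x1) => [E|n31].
    subst x3; rewrite eqxx /= in d13.
    by apply: (@c4 q m x1 x2 y1 y3) => //; un.
  case: (eqVneq x3 x2) => [E|n32].
    subst x3; rewrite eqxx /= in d23.
    by apply: (@c4 q m x1 x2 y1 y3) => //; un.
  by apply: (@c4 q m x1 x2 x3 y1) => //; un.
by apply: (@c4 q m x1 x2 y1 y2) => //; un.
Qed.


Lemma dot_vsc t e v : dot (vsc t e) v = t * dot e v.
Proof. rewrite /dot /vsc /=; ring. Qed.

Lemma dot_vscr t e v : dot v (vsc t e) = t * dot v e.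
Proof. rewrite /dot /vsc /=; ring. Qed.

Lemma move A q e : Vr A q ->
  (forall x y, x \in A -> y \notin A -> 0 <= dot e (nrm x y)) \/
  exists t x y, [/\ 0 <= t, Vr A (vadd q (vsc t e)), x \in A, y \notin A &
    dot e (nrm x y) < 0 /\ wf (P x) (vadd q (vsc t e)) = wf (P y) (vadd q (vsc t e))].
Proof.
move=> hV.
pose K (k : 'I_n * 'I_n) := [&& k.1 \in A, k.2 \notin A & dot e (nrm k.1 k.2) < 0].
case: (pickP K) => [k0 hk0|hno]; last first.
  left=> x y hx hy; have := hno (x, y); rewrite /K /= hx hy /= => /negbT.
  by rewrite -leNgt.
right.
pose ratio (k : 'I_n * 'I_n) := (wf (P k.2) q - wf (P k.1) q) / (-2 * dot e (nrm k.1 k.2)).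
case: (arg_minP ratio hk0) => k hk hmin.
move: (hk); rewrite /K => /and3P [hk1 hk2 hk3].
set t := ratio k.
have Dk : 0 < -2 * dot e (nrm k.1 k.2) by lra.
have t0 : 0 <= t.
  rewrite /t /ratio divr_ge0 //; last by lra.
  by have := hV _ _ hk1 hk2; lra.
exists t, k.1, k.2; split => //; last first.
  split => //; apply/eqP; rewrite eq_sym -subr_eq0; apply/eqP.
  rewrite wf_add dot_vsc.
  have ht : t * (-2 * dot e (nrm k.1 k.2)) = wf (P k.2) q - wf (P k.1) q.
    by rewrite /t /ratio divfK // gt_eqF.
  lra.
move=> x y hx hy.
have := wf_add (P x) (P y) q (vsc t e); rewrite dot_vsc -/(nrm x y) => E.
have g0 := hV _ _ hx hy.
case: (leP 0 (dot e (nrm x y))) => hd.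
  suff : 0 <= wf (P y) (vadd q (vsc t e)) - wf (P x) (vadd q (vsc t e)) by lra.
  rewrite E; have := mulr_ge0 t0 hd; lra.
have hK : K (x, y) by rewrite /K /= hx hy hd.
have := hmin _ hK; rewrite -/t /ratio /=.
have D : 0 < -2 * dot e (nrm x y) by lra.
rewrite ler_pdivlMr // => h.
suff : 0 <= wf (P y) (vadd q (vsc t e)) - wf (P x) (vadd q (vsc t e)) by lra.
rewrite E; have : t * (-2 * dot e (nrm x y)) = -2 * (t * dot e (nrm x y)) by ring.
lra.
Qed.


Definition act (A : {set 'I_n}) q x y := [/\ x \in A, y \notin A & wf (P x) q = wf (P y) q].
Definition Em (c : R * R) (A : {set 'I_n}) :=
  exists u, dot c u < 0 /\ forall x y, x \in A -> y \notin A -> 0 <= dot u (nrm x y).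
Definition lmin (c : R * R) (A : {set 'I_n}) q := Vr A q /\
  forall v, v != (0, 0) ->
    (forall x y, act A q x y -> 0 <= dot v (nrm x y)) -> 0 < dot c v.
Definition vert A q x1 y1 x2 y2 :=
  [/\ Vr A q, act A q x1 y1, act A q x2 y2 & crs (nrm x1 y1) (nrm x2 y2) != 0].

Lemma vadd0 q e : vadd q (vsc 0 e) = q.
Proof. by case: q => a b; rewrite /vadd /vsc /= !mul0r !addr0. Qed.

Lemma vaddsub q q' : q' = vadd q (vsub q' q).
Proof. by case: q q' => a b [a' b']; rewrite /vadd /vsub /=; congr pair; ring. Qed.

Lemma dot_vadd c q v : dot c (vadd q v) = dot c q + dot c v.
Proof. rewrite /dot /vadd /=; ring. Qed.

Lemma act_move A q x y t e : act A q x y -> dot e (nrm x y) = 0 ->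
  act A (vadd q (vsc t e)) x y.
Proof.
case=> hx hy he hd; split => //.
have := wf_add (P x) (P y) q (vsc t e); rewrite dot_vsc -/(nrm x y) hd he; lra.
Qed.

Lemma act_eq0 A q x y v : act A q x y -> act A (vadd q v) x y -> dot v (nrm x y) = 0.
Proof.
case=> _ _ h1 [_ _ h2]; have := wf_add (P x) (P y) q v; rewrite -/(nrm x y) h1 h2; lra.
Qed.

Lemma vert_uniq A q q' x1 y1 x2 y2 : vert A q x1 y1 x2 y2 -> vert A q' x1 y1 x2 y2 -> q = q'.
Proof.
case=> _ a1 a2 hc [_ b1 b2 _].
rewrite (vaddsub q q') in b1 b2.
have := vec_eq0 hc (act_eq0 a1 b1) (act_eq0 a2 b2).
case: q q' {a1 a2 b1 b2} => a b [a' b']; rewrite /vsub /= => -[h1 h2].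
by congr pair; apply/eqP; rewrite eq_sym -subr_eq0; apply/eqP.
Qed.

Lemma crs_nn x y : crs (nrm x y) (nrm x y) = 0.
Proof. rewrite /crs; ring. Qed.

Section Gen.
Variable c : R * R.
Hypothesis cgen : forall x y : 'I_n, x != y -> crs c (nrm x y) != 0.
Hypothesis cnz : 0 < c.1 ^+ 2 + c.2 ^+ 2.

Lemma reach_vertex A q : Vr A q -> Em c A \/ exists q' x1 y1 x2 y2, vert A q' x1 y1 x2 y2.
Proof.
move=> hV.
have dc : dot c (vsc (-1) c) < 0 by rewrite dot_vscr /dot; move: cnz; rewrite !expr2; lra.
case: (@move A q (vsc (-1) c) hV) => [h|[t [x1 [y1 [t0 hV1 hx1 hy1 [_ e1]]]]]].
  by left; exists (vsc (-1) c).
set q1 := vadd q (vsc t (vsc (-1) c)) in hV1 e1.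
have a1 : act A q1 x1 y1 by [].
set n1 := nrm x1 y1.
have cn1 : crs c n1 != 0 by apply: cgen; apply: memNeq hx1 hy1.
set e := vsc (- crs c n1) (n1.2, - n1.1).
have de1 : dot e n1 = 0 by rewrite dot_vsc /dot /=; ring.
have dce : dot c e < 0.
  rewrite dot_vscr /dot /=.
  have -> : c.1 * n1.2 + c.2 * - n1.1 = crs c n1 by rewrite /crs; ring.
  have : 0 < crs c n1 ^+ 2 by rewrite lt_neqAle sqr_ge0 andbT eq_sym sqrf_eq0.
  rewrite expr2; lra.
case: (@move A q1 e hV1) => [h|[t' [x2 [y2 [t0' hV2 hx2 hy2 [d2 e2]]]]]].
  by left; exists e.
right; exists (vadd q1 (vsc t' e)), x1, y1, x2, y2; split => //.
  exact: act_move.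
have : dot e (nrm x2 y2) = (crs c n1) * crs n1 (nrm x2 y2).
  rewrite dot_vsc /dot /crs /=; ring.
move=> h; apply/eqP => h0; move: d2; rewrite h h0 mulr0; lra.
Qed.


Lemma sq_pos (z : R) : z != 0 -> 0 < z * z.
Proof. by move=> hz; rewrite -expr2 lt_neqAle sqr_ge0 andbT eq_sym sqrf_eq0. Qed.

Lemma vertex_opt A q x1 y1 x2 y2 : vert A q x1 y1 x2 y2 ->
  0 < crs c (nrm x2 y2) * crs (nrm x1 y1) (nrm x2 y2) ->
  0 < crs (nrm x1 y1) c * crs (nrm x1 y1) (nrm x2 y2) -> lmin c A q.
Proof.
case=> hV a1 a2 hD ha hb; split => // v hv hcone.
have d1 := hcone _ _ a1; have d2 := hcone _ _ a2.
set n1 := nrm x1 y1 in ha hb hD d1 d2; set n2 := nrm x2 y2 in ha hb hD d1 d2.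
set D := crs n1 n2 in ha hb hD.
have E : D * D * dot c v = (crs c n2 * D) * dot v n1 + (crs n1 c * D) * dot v n2.
  rewrite /D /crs /dot; ring.
have DD := sq_pos hD.
have : 0 < dot v n1 \/ 0 < dot v n2.
  case: (ltrP 0 (dot v n1)) => h1; first by left.
  case: (ltrP 0 (dot v n2)) => h2; first by right.
  have e1 : dot v n1 = 0 by lra.
  have e2 : dot v n2 = 0 by lra.
  by move: hv; rewrite (vec_eq0 hD e1 e2) eqxx.
move=> H.
have : 0 < D * D * dot c v.
  rewrite E; case: H => H.
    have := mulr_gt0 ha H; have := mulr_ge0 (ltW hb) d2; lra.
  have := mulr_gt0 hb H; have := mulr_ge0 (ltW ha) d1; lra.
by rewrite pmulr_rgt0.
Qed.

Lemma vertex_step A q x1 y1 x2 y2 : vert A q x1 y1 x2 y2 ->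
  crs c (nrm x2 y2) * crs (nrm x1 y1) (nrm x2 y2) < 0 ->
  Em c A \/ exists q' x3 y3, vert A q' x2 y2 x3 y3 /\ dot c q' < dot c q.
Proof.
case=> hV a1 a2 hD hl.
set n1 := nrm x1 y1 in hl hD; set n2 := nrm x2 y2 in hl hD.
set D := crs n1 n2 in hl hD.
set e := vsc D (n2.2, - n2.1).
have de2 : dot e n2 = 0 by rewrite dot_vsc /dot /=; ring.
have de1 : dot e n1 = D * D by rewrite dot_vsc /dot /D /crs /=; ring.
have dce : dot c e < 0.
  rewrite dot_vscr.
  have -> : dot c (n2.2, - n2.1) = crs c n2 by rewrite /dot /crs /=; ring.
  by rewrite mulrC.
case: (@move A q e hV) => [h|[t [x3 [y3 [t0 hV3 hx3 hy3 [d3 e3]]]]]].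
  by left; exists e.
right.
have a3 : act A (vadd q (vsc t e)) x3 y3 by [].
have [tp|tz] : 0 < t \/ t = 0.
  by move: t0; rewrite le_eqVlt => /orP [/eqP ->|->]; [right|left].
  exists (vadd q (vsc t e)), x3, y3; split; first split => //.
  - exact: act_move.
  - have : dot e (nrm x3 y3) = - D * crs n2 (nrm x3 y3).
      rewrite dot_vsc /dot /crs /=; ring.
    move=> h; apply/eqP => h0; move: d3; rewrite h h0 mulr0; lra.
  - rewrite dot_vadd dot_vscr; have : 0 < t * (- dot c e) by apply: mulr_gt0 => //; lra.
    lra.
exfalso; rewrite tz vadd0 in a3.
case: a1 => hx1 hy1 e1; case: a2 => hx2 hy2 e2; case: a3 => _ _ e3'.
apply: (@three_act A q x1 y1 x2 y2 x3 y3) => //.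
- apply/eqP => -[E1 E2]; move: hD; rewrite /D /n1 /n2 E1 E2 crs_nn eqxx //.
- apply/eqP => -[E1 E2]; move: d3 de1; rewrite -E1 -E2 -/n1 => d3 de1.
  have := sq_pos hD; rewrite -/D; lra.
- apply/eqP => -[E1 E2]; move: d3 de2; rewrite -E1 -E2 -/n2 => d3 de2; lra.
Qed.


Definition cnt A q := #|[set k : ('I_n * 'I_n) * ('I_n * 'I_n) |
  `[< exists q', vert A q' k.1.1 k.1.2 k.2.1 k.2.2 /\ dot c q' < dot c q >]]|.

Lemma cnt_lt A q q' x1 y1 x2 y2 : vert A q' x1 y1 x2 y2 -> dot c q' < dot c q ->
  (cnt A q' < cnt A q)%N.
Proof.
move=> hv hlt; apply: proper_card; apply/properP; split.
  apply/subsetP => k; rewrite !inE => /asboolP [q'' [hv' hlt']].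
  apply/asboolP; exists q''; split => //; lra.
exists ((x1, y1), (x2, y2)); rewrite !inE.
  by apply/asboolP; exists q'.
apply/negP => /asboolP [q'' [hv' hlt']].
have := vert_uniq hv hv'; move=> E; move: hlt'; rewrite E; lra.
Qed.

Lemma progress A q x1 y1 x2 y2 : vert A q x1 y1 x2 y2 ->
  Em c A \/ (exists q, lmin c A q) \/
  exists q' x3 y3 x4 y4, vert A q' x3 y3 x4 y4 /\ dot c q' < dot c q.
Proof.
move=> hv; have hv' := hv; case: hv' => hV [hx1 hy1 _] [hx2 hy2 _] hD.
set n1 := nrm x1 y1 in hD; set n2 := nrm x2 y2 in hD.
have c2 : crs c n2 != 0 by apply: cgen; apply: memNeq hx2 hy2.
have c1 : crs c n1 != 0 by apply: cgen; apply: memNeq hx1 hy1.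
case: (ltrP (crs c n2 * crs n1 n2) 0) => ha.
  case: (vertex_step hv ha) => [h|[q' [x3 [y3 [hv3 hl]]]]]; first by left.
  by right; right; exists q', x2, y2, x3, y3.
case: (ltrP (crs n1 c * crs n1 n2) 0) => hb.
  have hv2 : vert A q x2 y2 x1 y1.
    case: hv => *; split => //; move: hD; rewrite /n1 /n2 /crs.
    by apply: contra => /eqP h; apply/eqP; lra.
  have hb' : crs c n1 * crs n2 n1 < 0 by move: hb; rewrite /crs; lra.
  case: (vertex_step hv2 hb') => [h|[q' [x3 [y3 [hv3 hl]]]]]; first by left.
  by right; right; exists q', x1, y1, x3, y3.
right; left; exists q; apply: (vertex_opt hv).
  rewrite lt_neqAle ha andbT eq_sym mulf_eq0 negb_or c2 //.
rewrite lt_neqAle hb andbT eq_sym mulf_eq0 negb_or hD andbT.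
by move: c1; rewrite /crs; apply: contra => /eqP h; apply/eqP; lra.
Qed.

Lemma from_vertex N : forall A q x1 y1 x2 y2, (cnt A q <= N)%N ->
  vert A q x1 y1 x2 y2 -> Em c A \/ exists q, lmin c A q.
Proof.
elim: N => [|N IH] A q x1 y1 x2 y2 hc hv.
  case: (progress hv) => [h|[h|[q' [x3 [y3 [x4 [y4 [hv' hl]]]]]]]]; [by left|by right|].
  by have := leq_trans (cnt_lt hv' hl) hc.
case: (progress hv) => [h|[h|[q' [x3 [y3 [x4 [y4 [hv' hl]]]]]]]]; [by left|by right|].
apply: (IH A q' x3 y3 x4 y4) => //.
by have := cnt_lt hv' hl; move=> h; rewrite -ltnS (leq_trans h).
Qed.

Lemma Em_or_lmin A : (exists q, Vr A q) -> Em c A \/ exists q, lmin c A q.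
Proof.
move=> [q hV]; case: (reach_vertex hV) => [h|[q' [x1 [y1 [x2 [y2 hv]]]]]]; first by left.
exact: (@from_vertex (cnt A q') A q' x1 y1 x2 y2).
Qed.

End Gen.


Lemma lmin_Vr c A q : lmin c A q -> Vr A q.
Proof. by case. Qed.

Lemma lmin_nEm c A q : lmin c A q -> ~ Em c A.
Proof.
case=> hV hl [u [hu hall]].
have u0 : u != (0, 0) by apply/eqP => E; move: hu; rewrite E /dot /=; lra.
have := hl u u0 (fun x y (h : act A q x y) => let: And3 hx hy _ := h in hall x y hx hy).
lra.
Qed.

Lemma dot_nrm u x y : dot u (nrm x y) = dot u (P x) - dot u (P y).
Proof. rewrite /dot /nrm /vsub /=; ring. Qed.

Lemma tie_uniq (A : {set 'I_n}) (u : R * R) (a b x y : 'I_n) : u.1 != 0 \/ u.2 != 0 ->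
  (forall x y, x \in A -> y \notin A -> 0 <= dot u (nrm x y)) ->
  a \in A -> b \notin A -> x \in A -> y \notin A ->
  dot u (nrm a b) = 0 -> dot u (nrm x y) = 0 -> x = a /\ y = b.
Proof.
move=> u0 hall ha hb hx hy e1 e2.
have h1 := hall _ _ hx hb; have h2 := hall _ _ ha hy.
move: e1 e2 h1 h2; rewrite !dot_nrm => e1 e2 h1 h2.
have lx : dot u (P x) = dot u (P a) by lra.
have ly : dot u (P y) = dot u (P a) by lra.
have lb : dot u (P b) = dot u (P a) by lra.
have col : forall i j k, dot u (P i) = dot u (P a) -> dot u (P j) = dot u (P a) ->
    dot u (P k) = dot u (P a) -> collinear (P i) (P j) (P k).
  move=> i j k hi hj hk; exists u.1, u.2, (dot u (P a)); split => //.
split.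
  apply/eqP; apply/negP => /negP nxa.
  apply: (gp.1 a b x (memNeq ha hb) _ _ (col _ _ _ _ _ _)) => //.
    by rewrite eq_sym.
  by rewrite eq_sym (memNeq hx hb).
apply/eqP; apply/negP => /negP nyb.
apply: (gp.1 a b y (memNeq ha hb) (memNeq ha hy) _ (col _ _ _ _ _ _)) => //.
by rewrite eq_sym.
Qed.

Lemma Em_Vr c (A : {set 'I_n}) : Em c A -> exists q, Vr A q.
Proof.
move=> [u [hu hall]].
have u0 : u.1 != 0 \/ u.2 != 0.
  case: (eqVneq u.1 0) => h1; last by left.
  case: (eqVneq u.2 0) => h2; last by right.
  by move: hu; rewrite /dot h1 h2 !mulr0 addr0 ltxx.
have [base Hb] : exists base, forall x y, x \in A -> y \notin A -> dot u (nrm x y) = 0 ->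
    wf (P x) base = wf (P y) base.
  case: (pselect (exists a b, [/\ a \in A, b \notin A & dot u (nrm a b) = 0])).
    move=> [a [b [ha hb hab]]].
    exists (((P a).1 + (P b).1) / 2, ((P a).2 + (P b).2) / 2) => x y hx hy hxy.
    have [-> ->] := tie_uniq u0 hall ha hb hx hy hab hxy.
    by rewrite /wf /=; field.
  move=> hno; exists (0, 0) => x y hx hy hxy; exfalso; apply: hno.
  by exists x, y.
pose term (k : 'I_n * 'I_n) := if 0 < dot u (nrm k.1 k.2) then
  `|wf (P k.1) base - wf (P k.2) base| / (2 * dot u (nrm k.1 k.2)) else 0.
have term0 k : 0 <= term k.
  rewrite /term; case: ifP => // h; rewrite divr_ge0 //; lra.
set t := \sum_(k : 'I_n * 'I_n) term k.
have tle k : term k <= t.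
  rewrite /t (bigD1 k) //=; have : 0 <= \sum_(j | j != k) term j by apply: sumr_ge0.
  lra.
exists (vadd base (vsc t u)) => x y hx hy.
have := wf_add (P x) (P y) base (vsc t u); rewrite dot_vsc -/(nrm x y) => E.
suff : 0 <= wf (P y) (vadd base (vsc t u)) - wf (P x) (vadd base (vsc t u)) by lra.
rewrite E.
have := hall _ _ hx hy; rewrite le_eqVlt => /orP [/eqP h0|hp].
  by rewrite -h0 mulr0 mulr0 addr0 (Hb x y hx hy (esym h0)) subrr.
have := tle (x, y); rewrite /term /= hp ler_pdivrMr; last by lra.
move=> h.
have := ler_norm (wf (P x) base - wf (P y) base).
have : t * (2 * dot u (nrm x y)) = 2 * (t * dot u (nrm x y)) by ring.
lra.
Qed.


Definition tie (A : {set 'I_n}) q : {set 'I_n} :=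
  [set i | [exists j, (((i \in A) && (j \notin A)) || ((j \in A) && (i \notin A)))
                        && (wf (P i) q == wf (P j) q)]].
Definition sdiff (A T : {set 'I_n}) := (A :\: T) :|: (T :\: A).

Lemma act_lvl A q x0 y0 x y : Vr A q -> act A q x0 y0 -> act A q x y ->
  wf (P x) q = wf (P x0) q /\ wf (P y) q = wf (P x0) q.
Proof.
move=> hV [hx0 hy0 e0] [hx hy e].
have := hV _ _ hx hy0; have := hV _ _ hx0 hy; lra.
Qed.

Lemma tie_lvl A q x0 y0 : Vr A q -> act A q x0 y0 ->
  forall i, (i \in tie A q) = (wf (P i) q == wf (P x0) q).
Proof.
move=> hV a0 i; have a0' := a0; case: a0' => hx0 hy0 e0.
rewrite inE; apply/existsP/eqP => [[j /andP [/orP [/andP [hi hj]|/andP [hj hi]] /eqP e]]|e].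
- by case: (act_lvl hV a0 (And3 hi hj e)).
- by case: (act_lvl hV a0 (And3 hj hi (esym e))).
case hi: (i \in A).
  by exists y0; rewrite hy0 /= e e0 eqxx ?orbT ?andbT.
by exists x0; rewrite hx0 /= e eqxx ?orbT ?andbT.
Qed.

Definition cneg (c : R * R) : R * R := (- c.1, - c.2).

Lemma lmin_act c A q : 0 < c.1 ^+ 2 + c.2 ^+ 2 -> lmin c A q -> exists x0 y0, act A q x0 y0.
Proof.
move=> cnz [hV hl]; apply: contrapT => hno.
have v0 : cneg c != (0, 0).
  apply/eqP => -[h1 h2]; move: cnz.
  have -> : c.1 = 0 by rewrite -[c.1]opprK h1 oppr0.
  have -> : c.2 = 0 by rewrite -[c.2]opprK h2 oppr0.
  by rewrite expr2 mulr0 addr0 ltxx.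
have := hl (cneg c) v0 (fun x y h => False_ind _ (hno (ex_intro _ x (ex_intro _ y h)))).
by rewrite /dot /cneg /=; move: cnz; rewrite !expr2; lra.
Qed.

Lemma lmin_lt c A q q' : lmin c A q -> Vr A q' -> q' != q -> dot c q < dot c q'.
Proof.
move=> [hV hl] hV' hne.
have v0 : vsub q' q != (0, 0).
  apply: contra hne => /eqP [h1 h2]; apply/eqP.
  by case: q q' {hl hV hV'} h1 h2 => a b [a' b'] /= /eqP; rewrite subr_eq0 => /eqP -> /eqP;
    rewrite subr_eq0 => /eqP ->.
have := hl _ v0 => /(_ _) h.
have : 0 < dot c (vsub q' q).
  apply: h => x y [hx hy e].
  have := wf_add (P x) (P y) q (vsub q' q); rewrite -vaddsub -/(nrm x y) e.
  have := hV' _ _ hx hy; lra.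
rewrite /dot /vsub /=; lra.
Qed.

Lemma lmin_uniq c A q q' : lmin c A q -> lmin c A q' -> q = q'.
Proof.
move=> h h'; case: (eqVneq q q') => // hne.
have hne' : q' != q by rewrite eq_sym.
have l1 := lmin_lt h (lmin_Vr h') hne'.
have l2 := lmin_lt h' (lmin_Vr h) hne.
exfalso; lra.
Qed.


Lemma card_tie c A q : 0 < c.1 ^+ 2 + c.2 ^+ 2 -> lmin c A q -> #|tie A q| = 3.
Proof.
move=> cnz hl; have [x0 [y0 a0]] := lmin_act cnz hl.
have hV := lmin_Vr hl; have a0' := a0; case: a0' => hx0 hy0 e0.
set T := tie A q.
have hT i : (i \in T) = (wf (P i) q == wf (P x0) q) := tie_lvl hV a0 i.
have x0T : x0 \in T by rewrite hT.
have y0T : y0 \in T by rewrite hT e0.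
have nxy : x0 != y0 := memNeq hx0 hy0.
have le3 : (#|T| <= 3)%N.
  rewrite leqNgt; apply/negP => h4.
  move: (enum_uniq T) (mem_enum T); rewrite cardE in h4.
  case E: (enum T) h4 => [|i [|j [|k [|l s]]]] // _ hu hm.
  have : uniq ([:: i; j; k; l] ++ s) by [].
  rewrite cat_uniq => /andP [u _].
  have mT z : z \in i :: j :: k :: l :: s -> wf (P z) q = wf (P x0) q.
    by move=> hz; apply/eqP; rewrite -hT -hm.
  by apply: (c4 u (mT i _) (mT j _) (mT k _) (mT l _)); rewrite !inE eqxx ?orbT.
have s2 : [set x0; y0] \subset T by apply/subsetP => z /set2P [] ->.
have ge2 : (2 <= #|T|)%N by have := subset_leq_card s2; rewrite cards2 nxy.
suff : #|T| != 2 by move: le3 ge2; case: #|T| => [|[|[|[|]]]].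
apply/eqP => hT2.
have ET : [set x0; y0] = T by apply/eqP; rewrite eqEcard s2 hT2 cards2 nxy.
have actE x y : act A q x y -> x = x0 /\ y = y0.
  move=> a; have := act_lvl hV a0 a; case: a => hx hy _ [l1 l2].
  have : x \in T by rewrite hT l1.
  have : y \in T by rewrite hT l2.
  rewrite -ET !inE => /orP [/eqP ey|/eqP ey] /orP [/eqP ex|/eqP ex]; subst; cl.
set n0 := nrm x0 y0.
have Pne : P x0 != P y0 by apply: contra nxy => /eqP /Pinj ->.
have n0nz : (n0.2, - n0.1) != (0, 0).
  apply: contra Pne => /eqP [h1 h2]; apply/eqP.
  move: h1 h2; rewrite /n0 /nrm /vsub /=; case: (P x0) (P y0) => a b [a' b'] /= h1 h2.
  congr pair; lra.
have n1nz : (- n0.2, n0.1) != (0, 0).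
  move: (n0nz); rewrite /n0 /nrm /vsub /= => hh; apply/eqP => -[h1 h2].
  by move/eqP: hh; apply; congr pair; lra.
have cone (v : R * R) : dot v n0 = 0 -> forall x y, act A q x y -> 0 <= dot v (nrm x y).
  by move=> hv x y /actE [-> ->]; rewrite -/n0 hv.
have := hl.2 _ n0nz (cone _ _); have := hl.2 _ n1nz (cone _ _).
rewrite /dot /=.
have -> : n0.2 * n0.1 + - n0.1 * n0.2 = 0 by ring.
have -> : - n0.2 * n0.1 + n0.1 * n0.2 = 0 by ring.
by move=> /(_ erefl) h1 /(_ erefl) h2; lra.
Qed.

Lemma sdiffK (A T : {set 'I_n}) : sdiff (sdiff A T) T = A.
Proof.
apply/setP => i; rewrite /sdiff !inE.
by case: (i \in A); case: (i \in T).
Qed.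

Section SD.
Variables (A : {set 'I_n}) (q : R * R) (x0 y0 : 'I_n).
Hypothesis hV : Vr A q.
Hypothesis a0 : act A q x0 y0.

Let m := wf (P x0) q.
Let A' := sdiff A (tie A q).

Lemma lt_in i : wf (P i) q < m -> i \in A.
Proof.
move=> h; apply: contraT => hi; case: a0 => hx0 _ _.
by have := @hV _ _ hx0 hi; rewrite /m in h; lra.
Qed.

Lemma gt_out i : m < wf (P i) q -> i \notin A.
Proof.
move=> h; apply/negP => hi; case: a0 => hx0 hy0 e0.
by have := @hV _ _ hi hy0; rewrite /m e0 in h; lra.
Qed.

Lemma inA' i : (i \in A') = (wf (P i) q < m) || ((wf (P i) q == m) && (i \notin A)).
Proof.
rewrite /A' /sdiff in_setU !in_setD (tie_lvl hV a0) -/m.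
case: (ltgtP (wf (P i) q) m) => h /=.
- by rewrite (lt_in h).
- by rewrite (negbTE (gt_out h)).
- by rewrite andbT.
Qed.

Lemma act_sw x y : act A' q x y <-> act A q y x.
Proof.
split.
  case; rewrite !inA' => hx hy e.
  move: hy; rewrite negb_or negb_and negbK -leNgt => /andP [hy1 hy2].
  case/orP: hx => [hx|/andP [/eqP hx hxA]]; first by lra.
  have ey : wf (P y) q == m by rewrite -e hx.
  by move: hy2; rewrite ey /= => hyA; split.
case=> hy hx e; have [l1 l2] := act_lvl hV a0 (And3 hy hx e); rewrite -/m in l1 l2.
split; rewrite ?inA' ?l1 ?l2 ?ltxx ?eqxx //= ?hy ?hx //; lra.
Qed.

Lemma Vr_sw : Vr A' q.
Proof.
move=> x y; rewrite !inA' negb_or negb_and negbK -leNgt => hx /andP [hy1 hy2].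
case/orP: hx => [hx|/andP [/eqP hx hxA]]; first by lra.
by rewrite hx.
Qed.

Lemma tie_sw : tie A' q = tie A q.
Proof.
have a0' : act A' q y0 x0 by apply/act_sw.
apply/setP => i; rewrite (tie_lvl Vr_sw a0') (tie_lvl hV a0).
by case: a0 => _ _ ->.
Qed.

Lemma sdiff_sw : sdiff A' (tie A q) = A.
Proof. exact: sdiffK. Qed.

Lemma lmin_sw c : lmin c A q -> lmin (cneg c) A' q.
Proof.
move=> [_ hl]; split; first exact: Vr_sw.
move=> v hv hc.
have hv' : vsc (-1) v != (0, 0).
  apply: contra hv => /eqP [h1 h2]; apply/eqP; case: v {hc} h1 h2 => a b /= h1 h2.
  by congr pair; lra.
have := hl _ hv' => /(_ _); rewrite /dot /cneg /vsc /=.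
suff H : forall x y, act A q x y -> 0 <= dot (vsc (-1) v) (nrm x y).
  by move=> /(_ H); lra.
move=> x y a; have := hc y x (proj2 (act_sw y x) a).
rewrite /dot /vsc /nrm /vsub /=; lra.
Qed.

End SD.


Lemma sign_flip (a b : nat) : odd (a + b) -> (-1) ^+ b = - ((-1) ^+ a : int).
Proof.
move=> h; rewrite -signr_odd -(signr_odd _ a); move: h; rewrite oddD.
by case: (odd a); case: (odd b).
Qed.

Definition fs (A : {set 'I_n}) : int := (-1) ^+ #|A|.
Definition Lo c A := exists q, lmin c A q.
Definition Rel c A B := exists q, lmin c A q /\ B = sdiff A (tie A q).

Lemma cnegK c : cneg (cneg c) = c.
Proof. by case: c => a b; rewrite /cneg /= !opprK. Qed.

Lemma cnz_neg (c : R * R) : 0 < c.1 ^+ 2 + c.2 ^+ 2 -> 0 < (cneg c).1 ^+ 2 + (cneg c).2 ^+ 2.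
Proof. by rewrite /cneg /= !sqrrN. Qed.

Lemma Rel_sym c A B : 0 < c.1 ^+ 2 + c.2 ^+ 2 -> Rel c A B -> Rel (cneg c) B A.
Proof.
move=> cnz [q [hl ->]]; have [x0 [y0 a0]] := lmin_act cnz hl.
have hV := lmin_Vr hl.
exists q; split; first exact: (lmin_sw hV a0 hl).
by rewrite (tie_sw hV a0) sdiff_sw.
Qed.

Lemma Rel_fun c A B B' : Rel c A B -> Rel c A B' -> B = B'.
Proof. by move=> [q [h ->]] [q' [h' ->]]; rewrite (lmin_uniq h h'). Qed.

Lemma Rel_sign c A B : 0 < c.1 ^+ 2 + c.2 ^+ 2 -> Rel c A B -> fs B = - fs A.
Proof.
move=> cnz [q [hl ->]]; have := card_tie cnz hl; set T := tie A q => hT.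
rewrite /fs /sdiff; apply: sign_flip.
rewrite cardsU.
have -> : (A :\: T) :&: (T :\: A) = set0.
  by apply/setP => i; rewrite !inE; case: (i \in A); case: (i \in T); rewrite ?andbF.
rewrite cards0 subn0.
have h1 : (#|A :&: T| + #|A :\: T| = #|A|)%N := cardsID T A.
have h2 : (#|A :&: T| + #|T :\: A| = #|T|)%N by rewrite setIC cardsID.
rewrite -h1; move: h2; rewrite hT.
move: #|A :&: T| #|A :\: T| #|T :\: A| => a b d h.
have -> : (a + b + (b + d) = (a + d) + b.*2)%N by rewrite -addnn; ring.
by rewrite h oddD odd_double.
Qed.

Lemma sum_Rel c (g : {set 'I_n} -> int) :
  \sum_(A : {set 'I_n}) (if `[< Lo c A >] then g A else 0) =
  \sum_(A : {set 'I_n}) \sum_(B : {set 'I_n}) (if `[< Rel c A B >] then g A else 0).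
Proof.
apply: eq_bigr => A _; case: asboolP => [[q hq]|hno].
  set B0 := sdiff A (tie A q).
  have h0 : Rel c A B0 by exists q.
  rewrite (bigD1 B0) //= (asboolT h0) big1 ?addr0 // => B hB.
  case: asboolP => // hr; move: hB; by rewrite (Rel_fun hr h0) eqxx.
rewrite big1 // => B _; case: asboolP => // [[q [hq _]]].
by exfalso; apply: hno; exists q.
Qed.

Lemma sumLo c : 0 < c.1 ^+ 2 + c.2 ^+ 2 ->
  \sum_(A : {set 'I_n}) (if `[< Lo c A >] then fs A else 0) =
  - \sum_(A : {set 'I_n}) (if `[< Lo (cneg c) A >] then fs A else 0).
Proof.
move=> cnz.
rewrite sum_Rel sum_Rel.
have -> : \sum_(A : {set 'I_n}) \sum_(B : {set 'I_n}) (if `[< Rel c A B >] then fs A else 0) =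
    \sum_(A : {set 'I_n}) \sum_(B : {set 'I_n}) (if `[< Rel (cneg c) B A >] then - fs B else 0).
  apply: eq_bigr => A _; apply: eq_bigr => B _.
  case: asboolP => h1; case: asboolP => h2 //.
  - by rewrite (Rel_sign cnz h1) opprK.
  - by exfalso; apply: h2; apply: Rel_sym.
  - by exfalso; apply: h1; rewrite -[c]cnegK; apply: Rel_sym => //; apply: cnz_neg.
rewrite exchange_big /= -sumrN; apply: eq_bigr => B _.
by rewrite -sumrN; apply: eq_bigr => A _; case: ifP; rewrite ?oppr0.
Qed.

Lemma Em_compl c A : Em c A -> Em (cneg c) (~: A).
Proof.
move=> [u [hu hall]]; exists (vsc (-1) u); split.
  by move: hu; rewrite /dot /cneg /vsc /=; lra.
move=> x y; rewrite !inE negbK => hx hy.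
have := hall _ _ hy hx; rewrite /dot /vsc /nrm /vsub /=; lra.
Qed.

Lemma Em_complE c A : Em (cneg c) (~: A) <-> Em c A.
Proof.
split; last exact: Em_compl.
by move/Em_compl; rewrite cnegK setCK.
Qed.


Lemma split_Pi c : (forall x y, x != y -> crs c (nrm x y) != 0) -> 0 < c.1 ^+ 2 + c.2 ^+ 2 ->
  \sum_(A : {set 'I_n}) (if `[< exists q, Vr A q >] then fs A else 0) =
  \sum_(A : {set 'I_n}) (if `[< Em c A >] then fs A else 0) +
  \sum_(A : {set 'I_n}) (if `[< Lo c A >] then fs A else 0).
Proof.
move=> cg cnz; rewrite -big_split; apply: eq_bigr => A _ /=.
case: asboolP => hv.
  case: (Em_or_lmin cg cnz hv) => [he|[q hq]].
    rewrite (asboolT he) (asboolF (_ : ~ Lo c A)) ?addr0 //.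
    by move=> [q hq]; exact: (lmin_nEm hq he).
  rewrite (asboolT (_ : Lo c A)); last by exists q.
  by rewrite (asboolF (lmin_nEm hq)) add0r.
rewrite (asboolF (_ : ~ Em c A)); last by move/Em_Vr.
rewrite (asboolF (_ : ~ Lo c A)) ?addr0 //.
by move=> [q [hV _]]; apply: hv; exists q.
Qed.

Lemma fsC A : odd n -> fs (~: A) = - fs A.
Proof.
move=> hn; rewrite /fs; apply: sign_flip.
by rewrite cardsC card_ord.
Qed.

Lemma sumEm c : odd n ->
  \sum_(A : {set 'I_n}) (if `[< Em (cneg c) A >] then fs A else 0) =
  - \sum_(A : {set 'I_n}) (if `[< Em c A >] then fs A else 0).
Proof.
move=> hn; rewrite (reindex_inj (@setC_inj _)) /= -sumrN; apply: eq_bigr => A _.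
case: asboolP => h1; case: asboolP => h2.
- by rewrite fsC.
- by exfalso; apply: h2; apply/Em_complE.
- by exfalso; apply: h1; apply/Em_complE.
- by rewrite oppr0.
Qed.

Lemma gen_exists : exists c : R * R,
  (forall x y, x != y -> crs c (nrm x y) != 0) /\ 0 < c.1 ^+ 2 + c.2 ^+ 2.
Proof.
pose term (k : 'I_n * 'I_n) := `|(nrm k.1 k.2).2 / (nrm k.1 k.2).1|.
set tt := 1 + \sum_(k : 'I_n * 'I_n) term k.
have tle k : term k <= tt - 1.
  rewrite /tt (bigD1 k) //=.
  have : 0 <= \sum_(j | j != k) term j by apply: sumr_ge0 => j _; apply: normr_ge0.
  lra.
exists (1, tt); split; last first.
  by rewrite /=; have := sqr_ge0 tt; lra.
move=> x y hxy.
have Pne : P x != P y by apply: contra hxy => /eqP /Pinj ->.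
set v := nrm x y.
change (1 * v.2 - tt * v.1 != 0); rewrite mul1r.
case: (eqVneq v.1 0) => h1.
  rewrite h1 mulr0 subr0; apply: contra Pne => /eqP h2; apply/eqP.
  move: h1 h2; rewrite /v /nrm /vsub /=; case: (P x) (P y) => a b [a' b'] /= h1 h2.
  congr pair; lra.
apply/eqP => h.
have e : v.2 / v.1 = tt.
  apply/eqP; rewrite -(inj_eq (mulIf h1)) divfK //; apply/eqP; lra.
have := tle (x, y); rewrite /term /= -/v e.
have := ler_norm tt; lra.
Qed.

Lemma card_sum (k : nat) :
  (-1) ^+ k.+1 * (fbar P k)%:Z =
  \sum_(A : {set 'I_n}) (if `[< voronoi_nonempty P A >] && (#|A| == k) then (-1) ^+ k.+1 else 0).
Proof.
rewrite /fbar -natz mulr_natr -sumr_const big_mkcond /=.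
by apply: eq_bigr => A _; rewrite inE.
Qed.

Lemma red_euler_E : red_euler_char P =
  - \sum_(A : {set 'I_n}) (if `[< voronoi_nonempty P A >] then fs A else 0).
Proof.
rewrite /red_euler_char.
under eq_bigr => k _ do rewrite card_sum.
rewrite exchange_big /= -sumrN; apply: eq_bigr => A _.
case: asboolP => hv /=; last by rewrite big1 ?oppr0.
have hA : (#|A| < n.+1)%N by rewrite ltnS; have := max_card A; rewrite card_ord.
rewrite (bigD1 (Ordinal hA)) //= eqxx big1 ?addr0.
  by rewrite /fs exprS mulN1r.
by move=> k hk; rewrite eq_sym; case: eqP => // E; move: hk; rewrite (_ : k = Ordinal hA) ?eqxx //; apply: val_inj.
Qed.

End Vor.
End Geo.


Unset Implicit Arguments.

Theorem mainTheorem9 (R : realType) (n : nat) (P : 'I_n -> pt R) :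
  injective P -> (3 <= n)%N -> odd n -> general_position P ->
  red_euler_char P = 0.
Proof.
move=> Pinj _ hn gp.
have [c [cg cnz]] := gen_exists Pinj.
have cg' : forall x y, x != y -> crs (cneg c) (nrm P x y) != 0.
  move=> x y hxy; have := cg x y hxy.
  have -> : crs (cneg c) (nrm P x y) = - crs c (nrm P x y) by rewrite /crs /cneg /=; ring.
  by rewrite oppr_eq0.
have e1 := split_Pi Pinj gp cg cnz.
have e2 := split_Pi Pinj gp cg' (cnz_neg cnz).
have e3 := sumLo Pinj gp cnz.
have e4 := sumEm P c hn.
rewrite red_euler_E.
have -> : \sum_(A : {set 'I_n}) (if `[< voronoi_nonempty P A >] then fs A else 0) =
          \sum_(A : {set 'I_n}) (if `[< exists q, Vr P A q >] then fs A else 0).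
  apply: eq_bigr => A _; case: asboolP => h1; case: asboolP => h2 //.
    by exfalso; apply: h2; apply/vnE.
  by exfalso; apply: h1; apply/vnE.
lra.
Qed.
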